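(* For every finite connected undirected unweighted graph $G=(V,E)$ with $n$ vertices, every $r\ge 1$ and every $S_0\subseteq V$, $\mathrm{fp}^{1/2,r}_G(S_0)\ge |S_0|/n$.
   Context: The $\lambda$-mixed Moran process on a connected graph $G=(V,E)$ with $n=|V|\ge 2$: each vertex hosts a resident (fitness $1$) or mutant (fitness $r>0$); the state is the mutant set $S_t\subseteq V$. Each step, independently: with probability $\lambda$ a Birth-death step (a vertex $u$ chosen with probability proportional to fitness among all vertices; a uniformly random neighbor of $u$ takes $u$'s type); with probability $1-\lambda$ a death-Birth step (a uniformly random vertex $v$ dies; a neighbor $u$ of $v$ chosen with probability proportional to fitness among the neighbors of $v$; $v$ takes $u$'s type). $\mathrm{fp}^{\lambda,r}_G(S_0)$ is the probability that the process started at $S_0$ reaches $S_t=V$. *)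

(* Defs.v *)
From HB Require Import structures.
From mathcomp Require Import all_boot all_order all_algebra.
From mathcomp Require Import all_classical all_reals all_analysis.
Set Implicit Arguments. Unset Strict Implicit. Unset Printing Implicit Defensive.
Import Order.TTheory GRing.Theory Num.Theory numFieldNormedType.Exports.
Local Open Scope ring_scope.

Section Moran.
Variables (R : realType) (V : finType) (e : rel V).

Definition simple_graph := symmetric e /\ irreflexive e.
Definition connected_graph := forall x y : V, connect e x y.

Definition nbhd (u : V) : {set V} := [set v | e u v].

(* fitness: mutants (in S) have fitness r, residents fitness 1 *)
Definition fit (r : R) (S : {set V}) (u : V) : R := if u \in S then r else 1.

(* vertex v takes the type of vertex u *)
Definition upd (S : {set V}) (u v : V) : {set V} :=
  if u \in S then v |: S else S :\ v.

(* one-step transition probability of the lambda-mixed Moran process *)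
Definition trans (lam r : R) (S S' : {set V}) : R :=
  lam * (\sum_(u : V) \sum_(v in nbhd u)
           (fit r S u / (\sum_(w : V) fit r S w)) * (#|nbhd u|%:R)^-1
           * (upd S u v == S')%:R)
  + (1 - lam) * (\sum_(v : V) \sum_(u in nbhd v)
           (#|V|%:R)^-1 * (fit r S u / (\sum_(w in nbhd v) fit r S w))
           * (upd S u v == S')%:R).

Fixpoint hitV (lam r : R) (t : nat) (S : {set V}) : R :=
  if S == [set: V] then 1 else
  match t with
  | 0 => 0
  | t'.+1 => \sum_(S' : {set V}) trans lam r S S' * hitV lam r t' S'
  end.

(* fixation probability: probability of ever reaching S_t = V,
   i.e. the limit of the (nondecreasing) probabilities of reaching V
   within t steps *)
Definition fp (lam r : R) (S0 : {set V}) : R := limn (fun t => hitV lam r t S0).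

End Moran.

(* Main.v *)
Require Import Defs.
From HB Require Import structures.
From mathcomp Require Import all_boot all_order all_algebra.
From mathcomp Require Import all_classical all_reals all_analysis.
From mathcomp Require Import ring lra.
Import Order.TTheory GRing.Theory Num.Theory numFieldNormedType.Exports.
Local Open Scope ring_scope.

Section Pf.
Variables (R : realType) (V : finType) (e : rel V).
Hypothesis Hsym : symmetric e.
Hypothesis Hconn : connected_graph e.
Hypothesis Hn : (1 < #|V|)%N.
Variable r : R.
Hypothesis Hr : 1 <= r.

Local Notation lam := (2^-1 : R).
Local Notation nR := (#|V|%:R : R).
Local Notation F S := (\sum_(w : V) fit r S w).
Local Notation G S v := (\sum_(w in nbhd e v) fit r S w).
Local Notation d u := (#|nbhd e u|%:R : R).

Lemma r_gt0 : 0 < r. Proof. by apply: lt_le_trans Hr. Qed.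

Lemma fit_ge1 (S : {set V}) u : 1 <= fit r S u. Proof. by rewrite /fit; case: ifP. Qed.
Lemma fit_ler (S : {set V}) u : fit r S u <= r. Proof. by rewrite /fit; case: ifP. Qed.

Lemma nR_gt0 : 0 < nR. Proof. rewrite ltr0n; by apply: ltn_trans Hn. Qed.

Lemma F_ge (S : {set V}) : nR <= F S.
Proof.
have -> : nR = \sum_(w : V) (1 : R) by rewrite sumr_const cardT -cardE.
by apply: ler_sum => w _; apply: fit_ge1.
Qed.

Lemma F_le (S : {set V}) : F S <= r * nR.
Proof.
have -> : r * nR = \sum_(w : V) r by rewrite sumr_const cardT -cardE mulr_natr.
by apply: ler_sum => w _; apply: fit_ler.
Qed.

Lemma F_gt0 (S : {set V}) : 0 < F S.
Proof. exact: lt_le_trans nR_gt0 (F_ge S). Qed.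

Lemma G_ge (S : {set V}) v : d v <= G S v.
Proof.
have -> : d v = \sum_(w in nbhd e v) (1 : R) by rewrite sumr_const.
by apply: ler_sum => w _; apply: fit_ge1.
Qed.

Lemma G_le (S : {set V}) v : G S v <= r * d v.
Proof.
have -> : r * d v = \sum_(w in nbhd e v) r by rewrite sumr_const mulr_natr.
by apply: ler_sum => w _; apply: fit_ler.
Qed.

Lemma nbhd_nonempty v : (0 < #|nbhd e v|)%N.
Proof.
have [y Hy] : exists y, y != v.
  have : (1 < #|[set~ v]|.+1)%N by rewrite cardsC1 prednK // (ltn_trans _ Hn).
  rewrite ltnS card_gt0 => /set0Pn [y]; rewrite !inE => Hy; by exists y.
have /connectP [p Hp Hl] := Hconn v y.
case: p Hp Hl => [|z p] /=; first by move=> _ Hl; rewrite Hl eqxx in Hy.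
move=> /andP [Hz _] _; apply/card_gt0P; exists z; by rewrite inE.
Qed.

Lemma d_gt0 v : 0 < d v. Proof. by rewrite ltr0n nbhd_nonempty. Qed.
Lemma d_le v : d v <= nR. Proof. by rewrite ler_nat max_card. Qed.

Lemma G_gt0 (S : {set V}) v : 0 < G S v.
Proof. exact: lt_le_trans (d_gt0 v) (G_ge S v). Qed.

Definition wB (S : {set V}) u := fit r S u / F S * (d u)^-1.
Definition wD (S : {set V}) (u v : V) := nR^-1 * (fit r S u / G S v).

Lemma fit_ge0 (S : {set V}) u : 0 <= fit r S u.
Proof. exact: le_trans ler01 (fit_ge1 S u). Qed.

Lemma wB_ge0 S u : 0 <= wB S u.
Proof.
by rewrite /wB !mulr_ge0 ?invr_ge0 ?fit_ge0 ?ltW ?F_gt0 ?d_gt0.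
Qed.

Lemma wD_ge0 S u v : 0 <= wD S u v.
Proof.
by rewrite /wD !mulr_ge0 ?invr_ge0 ?fit_ge0 ?ltW ?G_gt0 ?nR_gt0.
Qed.

Definition Ex (S : {set V}) (k : V -> V -> R) :=
  lam * (\sum_u \sum_(v in nbhd e u) wB S u * k u v)
  + (1 - lam) * (\sum_v \sum_(u in nbhd e v) wD S u v * k u v).

Definition T (f : {set V} -> R) (S : {set V}) :=
  \sum_(S' : {set V}) trans e lam r S S' * f S'.

Lemma sum_ind (g : V -> V -> {set V}) (c : V -> V -> R) (P : V -> pred V)
   (f : {set V} -> R) :
  \sum_(S' : {set V}) (\sum_x \sum_(y | P x y) c x y * (g x y == S')%:R) * f S'
  = \sum_x \sum_(y | P x y) c x y * f (g x y).
Proof.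
under eq_bigr do rewrite mulr_suml.
rewrite exchange_big; apply: eq_bigr => x _.
under eq_bigr do rewrite mulr_suml.
rewrite exchange_big; apply: eq_bigr => y _.
rewrite (bigD1 (g x y)) //= eqxx mulr1 big1 ?addr0 // => S' /negbTE H.
by rewrite eq_sym H mulr0 mul0r.
Qed.

Lemma Texp f S : T f S = Ex S (fun u v => f (upd S u v)).
Proof.
rewrite /T /trans /Ex.
under eq_bigr do rewrite mulrDl -!mulrA.
rewrite big_split /= -!mulr_sumr; congr (_ * _ + _ * _).
  by rewrite -(sum_ind (fun u v => upd S u v)).
by rewrite -(sum_ind (fun v u => upd S u v) (fun v u => wD S u v)).
Qed.

Lemma Ex1 S : Ex S (fun _ _ => 1) = 1.
Proof.
rewrite /Ex.
have -> : \sum_u \sum_(v in nbhd e u) wB S u * 1 = 1.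
  have H u : \sum_(v in nbhd e u) wB S u * 1 = fit r S u / F S.
    rewrite sumr_const /wB mulr1 -mulrnAr.
    have -> : (d u)^-1 *+ #|nbhd e u| = (d u)^-1 * d u by rewrite mulr_natr.
    by rewrite mulVf ?mulr1 // gt_eqF // d_gt0.
  under eq_bigr do rewrite H.
  by rewrite -mulr_suml mulfV // gt_eqF ?F_gt0.
have -> : \sum_v \sum_(u in nbhd e v) wD S u v * 1 = 1.
  under eq_bigr => v _.
    under eq_bigr do rewrite mulr1 /wD.
    rewrite -mulr_sumr -mulr_suml mulfV ?mulr1; last by rewrite gt_eqF ?G_gt0.
  over.
  by rewrite sumr_const cardT -cardE -(mulr_natr (nR^-1)) mulVf // gt_eqF ?nR_gt0.
by rewrite !mulr1 addrC subrK.
Qed.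

Lemma Ex_affine S a b k :
  Ex S (fun u v => a + b * k u v) = a * Ex S (fun _ _ => 1) + b * Ex S k.
Proof.
rewrite /Ex.
rewrite !mulrDr !mulrA.
set X1 := \sum_u _; set X2 := \sum_v _; set Y1 := \sum_u _; set Y2 := \sum_v _.
Abort.

Lemma dsum_aff (P : V -> pred V) (w k : V -> V -> R) a b :
  \sum_x \sum_(y | P x y) w x y * (a + b * k x y)
  = a * (\sum_x \sum_(y | P x y) w x y * 1) + b * (\sum_x \sum_(y | P x y) w x y * k x y).
Proof.
rewrite !mulr_sumr -big_split; apply: eq_bigr => x _.
rewrite !mulr_sumr -big_split; apply: eq_bigr => y _ /=; ring.
Qed.

Lemma Ex_affine S a b k :
  Ex S (fun u v => a + b * k u v) = a * Ex S (fun _ _ => 1) + b * Ex S k.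
Proof.
rewrite /Ex (dsum_aff (fun u v => v \in nbhd e u) (fun u _ => wB S u)).
rewrite (dsum_aff (fun v u => u \in nbhd e v) (fun v u => wD S u v) (fun v u => k u v)).
ring.
Qed.

Lemma T1 S : T (fun _ => 1) S = 1.
Proof. by rewrite Texp Ex1. Qed.

Lemma trans_ge0 S S' : 0 <= trans e lam r S S'.
Proof.
have h1 : (0 : R) <= 2^-1 by rewrite invr_ge0.
have h2 : (0 : R) <= 1 - 2^-1 by rewrite subr_ge0 invf_le1 ?ler1n.
rewrite /trans; apply: addr_ge0; apply: mulr_ge0 => //.
- apply: sumr_ge0 => u _; apply: sumr_ge0 => v _.
  apply: mulr_ge0; [exact: (wB_ge0 S u) | exact: ler0n].
- apply: sumr_ge0 => u _; apply: sumr_ge0 => v _.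
  apply: mulr_ge0; [exact: (wD_ge0 S v u) | exact: ler0n].
Qed.

Lemma T_mono f g S : (forall S', f S' <= g S') -> T f S <= T g S.
Proof.
move=> H; apply: ler_sum => S' _; apply: ler_wpM2l; [exact: trans_ge0 | exact: H].
Qed.

Lemma T_add f g S : T (fun S' => f S' + g S') S = T f S + T g S.
Proof. by rewrite /T -big_split; apply: eq_bigr => S' _; rewrite mulrDr. Qed.

Lemma T_scale c f S : T (fun S' => c * f S') S = c * T f S.
Proof. by rewrite /T mulr_sumr; apply: eq_bigr => S' _; rewrite mulrCA. Qed.

Lemma inv_le (a b : R) : 0 < a -> a <= b -> b^-1 <= a^-1.
Proof. move=> Ha Hab; rewrite lef_pV2 ?posrE //; exact: lt_le_trans Hab. Qed.

Definition cc (S : {set V}) u v : R :=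
  ((u \in S) && (v \notin S))%:R - ((v \in S) && (u \notin S))%:R.

Lemma card_upd S u v : #|upd S u v|%:R = #|S|%:R + cc S u v :> R.
Proof.
rewrite /upd /cc; case Hu: (u \in S); case Hv: (v \in S) => /=.
- have -> : v |: S = S by apply/setP => x; rewrite !inE; case: eqP => // ->.
  by rewrite subrr addr0.
- by rewrite cardsU1 Hv natrD addrC subr0.
- rewrite (cardsD1 v S) Hv /= natrD; ring.
- have -> : S :\ v = S by apply/setP => x; rewrite !inE; case: eqP => // ->; rewrite Hv.
  by rewrite subrr addr0.
Qed.

Definition H (S : {set V}) u v : R :=
  (e u v)%:R * (lam * wB S u + (1 - lam) * wD S u v).

Lemma Ex_full S k : Ex S k = \sum_u \sum_v H S u v * k u v.
Proof.
have E1 : \sum_u \sum_(v in nbhd e u) wB S u * k u v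
          = \sum_u \sum_v (e u v)%:R * wB S u * k u v.
  apply: eq_bigr => u _; rewrite big_mkcond; apply: eq_bigr => v _.
  by rewrite inE; case: (e u v); rewrite ?mul1r ?mul0r.
have E2 : \sum_v \sum_(u in nbhd e v) wD S u v * k u v
          = \sum_u \sum_v (e u v)%:R * wD S u v * k u v.
  transitivity (\sum_v \sum_u (e v u)%:R * wD S u v * k u v).
    apply: eq_bigr => v _; rewrite big_mkcond; apply: eq_bigr => u _.
    by rewrite inE; case: (e v u); rewrite ?mul1r ?mul0r.
  rewrite exchange_big; apply: eq_bigr => u _; apply: eq_bigr => v _.
  by rewrite Hsym.
rewrite /Ex E1 E2 !mulr_sumr -big_split; apply: eq_bigr => u _.
rewrite !mulr_sumr -big_split; apply: eq_bigr => v _ /=.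
rewrite /H; ring.
Qed.

Lemma core (S : {set V}) u v : u \in S -> v \notin S ->
  lam * wB S v + (1 - lam) * wD S v u <= lam * wB S u + (1 - lam) * wD S u v.
Proof.
move=> Hu Hv.
have fu : fit r S u = r by rewrite /fit Hu.
have fv : fit r S v = 1 by rewrite /fit (negbTE Hv).
rewrite /wB /wD fu fv.
have Fp := F_gt0 S; have np := nR_gt0; have rp := r_gt0.
have dup := d_gt0 u; have dvp := d_gt0 v.
have a : nR^-1 * (d u)^-1 <= r / F S * (d u)^-1.
  apply: ler_wpM2r; first by rewrite invr_ge0 ltW.
  rewrite -[r / F S]invf_div; apply: inv_le; first by rewrite divr_gt0.
  by rewrite ler_pdivrMr // mulrC F_le.
have b : 1 / F S * (d v)^-1 <= nR^-1 * (d v)^-1.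
  apply: ler_wpM2r; first by rewrite invr_ge0 ltW.
  by rewrite mul1r; apply: inv_le => //; apply: F_ge.
have c : nR^-1 * (d v)^-1 <= nR^-1 * (r / G S v).
  apply: ler_wpM2l; first by rewrite invr_ge0 ltW.
  rewrite -[r / G S v]invf_div; apply: inv_le; first by rewrite divr_gt0 ?G_gt0.
  by rewrite ler_pdivrMr // mulrC G_le.
have d' : nR^-1 * (1 / G S u) <= nR^-1 * (d u)^-1.
  apply: ler_wpM2l; first by rewrite invr_ge0 ltW.
  by rewrite mul1r; apply: inv_le => //; apply: G_ge.
have hl : (1 - lam) = lam by field.
rewrite hl -!mulrDr; apply: ler_wpM2l; first by rewrite invr_ge0.
lra.
Qed.

Lemma Ex_cc_ge0 S : 0 <= Ex S (cc S).
Proof.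
rewrite Ex_full.
set K := fun u v => H S u v * cc S u v.
have pw u v : 0 <= K u v + K v u.
  rewrite /K /H /cc Hsym.
  case Hu: (u \in S); case Hv: (v \in S); case: (e v u) => /=;
    rewrite ?mul0r ?mul1r ?add0r ?subr0 ?sub0r ?subrr ?oppr0 ?mulr0 ?addr0 ?mulrN1 ?mulr1 //.
  - by rewrite subr_ge0 core ?Hv ?Hu.
  - by rewrite addrC subr_ge0 core ?Hv ?Hu.
have : 0 <= \sum_u \sum_v (K u v + K v u).
  by apply: sumr_ge0 => u _; apply: sumr_ge0 => v _; apply: pw.
under eq_bigr do rewrite big_split.
rewrite big_split /= [X in _ + X]exchange_big /=.
have -> : \sum_u \sum_v H S u v * cc S u v = \sum_u \sum_v K u v by [].
lra.
Qed.

Definition Phi (S : {set V}) : R := #|S|%:R / nR.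

Lemma sub_mart S : Phi S <= T Phi S.
Proof.
rewrite Texp.
have -> : (fun u v => Phi (upd S u v)) = (fun u v => Phi S + nR^-1 * cc S u v).
  apply/funext => u; apply/funext => v.
  by rewrite /Phi card_upd mulrDl [cc S u v * _]mulrC.
rewrite Ex_affine Ex1 mulr1 lerDl; apply: mulr_ge0; last exact: Ex_cc_ge0.
by rewrite invr_ge0 ltW ?nR_gt0.
Qed.

Local Notation set0 := (@finset.set0 V).
Local Notation h := (hitV e lam r).

Lemma hS t S : h t.+1 S = if S == [set: V] then 1 else T (h t) S.
Proof. by []. Qed.

Lemma h0 S : h 0 S = if S == [set: V] then 1 else 0.
Proof. by []. Qed.

Fixpoint q t S : R := if (S == [set: V]) || (S == set0) then 0 else
  match t with 0 => 1 | t'.+1 => T (q t') S end.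

Lemma setT_ne0 : [set: V] != set0 :> {set V}.
Proof.
apply/eqP => H0; have := Hn; by rewrite -cardsT H0 cards0.
Qed.

Lemma h_ge0 t S : 0 <= h t S.
Proof.
elim: t S => [|t IH] S; first by rewrite h0; case: ifP.
rewrite hS; case: ifP => // _; apply: sumr_ge0 => S' _.
by apply: mulr_ge0; [exact: trans_ge0 | exact: IH].
Qed.

Lemma q_ge0 t S : 0 <= q t S.
Proof.
elim: t S => [|t IH] S /=; first by case: ifP.
case: ifP => // _; apply: sumr_ge0 => S' _.
by apply: mulr_ge0; [exact: trans_ge0 | exact: IH].
Qed.

Lemma trans_empty S' : S' != set0 -> trans e lam r set0 S' = 0.
Proof.
move=> HS'.
have U u v : upd set0 u v == S' = false.
  rewrite /upd inE finset.set0D; apply/negbTE; by rewrite eq_sym.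
rewrite /trans.
under eq_bigr do under eq_bigr do rewrite U mulr0.
under [X in _ + _ * X]eq_bigr do under eq_bigr do rewrite U mulr0.
under eq_bigr do rewrite sumr_const mul0rn.
by rewrite !sumr_const !mul0rn !mulr0 addr0.
Qed.

Lemma h_empty t : h t set0 = 0.
Proof.
elim: t => [|t IH]; first by rewrite h0 eq_sym (negbTE setT_ne0).
rewrite hS eq_sym (negbTE setT_ne0); apply: big1 => S' _.
case: (eqVneq S' set0) => [->|H']; first by rewrite IH mulr0.
by rewrite trans_empty // mul0r.
Qed.

Lemma hq_le1 t S : h t S + q t S <= 1.
Proof.
elim: t S => [|t IH] S.
  rewrite h0 /=; case: (eqVneq S [set: V]) => [->|HT] /=; first by rewrite addr0.
  by case: ifP => _; rewrite add0r ?ler01.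
rewrite hS /=; case: (eqVneq S [set: V]) => [_|HT] /=; first by rewrite addr0.
case: (eqVneq S set0) => [->|H0] /=.
  rewrite addr0 -[X in _ <= X](T1 set0); apply: T_mono => S'.
  by apply: le_trans _ (IH S'); rewrite lerDl q_ge0.
rewrite -(T_add (h t) (q t)) -[X in _ <= X](T1 S); apply: T_mono => S'; exact: IH.
Qed.

Lemma phi_le t S : Phi S <= h t S + q t S.
Proof.
have PhiT : Phi [set: V] = 1 by rewrite /Phi cardsT mulfV // gt_eqF ?nR_gt0.
have Phi0 : Phi set0 = 0 by rewrite /Phi cards0 mul0r.
elim: t S => [|t IH] S.
  rewrite h0 /=; case: (eqVneq S [set: V]) => [->|HT] /=; first by rewrite PhiT addr0.
  case: (eqVneq S set0) => [->|H0] /=; first by rewrite Phi0 addr0.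
  by rewrite add0r /Phi ler_pdivrMr ?nR_gt0 // mul1r ler_nat max_card.
rewrite hS /=; case: (eqVneq S [set: V]) => [->|HT] /=; first by rewrite PhiT addr0.
case: (eqVneq S set0) => [->|H0] /=; first by rewrite Phi0 addr0; apply: sumr_ge0 => S' _; apply: mulr_ge0; [exact: trans_ge0|exact: h_ge0].
rewrite -(T_add (h t) (q t)); apply: le_trans (sub_mart S) _; apply: T_mono => S'; exact: IH.
Qed.

Lemma cut_edge (S : {set V}) : S != set0 -> S != [set: V] ->
  exists u v, [/\ u \in S, v \notin S & e u v].
Proof.
move=> H0 HT.
have [x Hx] := set0Pn _ H0.
have [y Hy] : exists y, y \notin S.
  case: (boolP [exists y, y \notin S]) => [/existsP//|/existsPn H].
  case/negP: HT; apply/eqP/setP => z; rewrite inE; move: (H z); by rewrite negbK.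
case: (boolP [exists u, exists v, [&& u \in S, v \notin S & e u v]]).
  move=> /existsP [u /existsP [v /and3P [a b c]]]; by exists u, v.
move=> Hno.
have cl : fingraph.closed e S.
  apply: (intro_closed (sym_connect_sym Hsym)) => a b eab aS.
  apply/negPn/negP => bS; case/negP: Hno.
  apply/existsP; exists a; apply/existsP; exists b; by rewrite aS bS eab.
have := closed_connect cl (Hconn x y).
by rewrite Hx (negbTE Hy).
Qed.

Definition delta : R := lam * (nR * nR)^-1.

Lemma delta_gt0 : 0 < delta.
Proof. by rewrite /delta mulr_gt0 ?invr_gt0 ?mulr_gt0 ?nR_gt0. Qed.

Lemma delta_le1 : delta <= 1.
Proof.
have n1 : 1 <= nR by rewrite ler1n ltnW.
have : (nR * nR)^-1 <= 1 by rewrite invf_le1 ?mulr_gt0 ?nR_gt0 //; nra.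
have : 0 <= (nR * nR)^-1 by rewrite invr_ge0 ltW ?mulr_gt0 ?nR_gt0.
rewrite /delta; set z := (nR * nR)^-1 => *.
have : (2^-1 : R) = 1/2 by rewrite mul1r.
lra.
Qed.

Lemma trans_cut (S : {set V}) u v : u \in S -> v \notin S -> e u v ->
  delta <= trans e lam r S (v |: S).
Proof.
move=> Hu Hv Huv.
have Hw : (nR * nR)^-1 <= wB S u.
  have fu : fit r S u = r by rewrite /fit Hu.
  rewrite /wB fu invfM; apply: ler_pM.
  - by rewrite invr_ge0 ltW ?nR_gt0.
  - by rewrite invr_ge0 ltW ?nR_gt0.
  - rewrite -[r / F S]invf_div; apply: inv_le; first by rewrite divr_gt0 ?r_gt0 ?F_gt0.
    by rewrite ler_pdivrMr ?r_gt0 // mulrC F_le.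
  - by apply: inv_le; [exact: d_gt0 | exact: d_le].
have HB : wB S u <= \sum_u' \sum_(v' in nbhd e u')
    fit r S u' / (\sum_w fit r S w) * (#|nbhd e u'|%:R)^-1 * (upd S u' v' == v |: S)%:R.
  rewrite (bigD1 u) //= (bigD1 v) ?inE //= /upd Hu eqxx mulr1 -addrA lerDl.
  apply: addr_ge0; apply: sumr_ge0 => x _; last apply: sumr_ge0 => y _.
  - apply: mulr_ge0; [exact: wB_ge0 | exact: ler0n].
  - apply: mulr_ge0; [exact: wB_ge0 | exact: ler0n].
have HD : 0 <= \sum_v' \sum_(u' in nbhd e v')
    nR^-1 * (fit r S u' / (\sum_(w in nbhd e v') fit r S w)) * (upd S u' v' == v |: S)%:R.
  apply: sumr_ge0 => x _; apply: sumr_ge0 => y _.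
  apply: mulr_ge0; [exact: (wD_ge0 S y x) | exact: ler0n].
have lam0 : (0 : R) <= lam by rewrite invr_ge0.
have l1 := ler_wpM2l lam0 (le_trans Hw HB).
have l2 : 0 <= (1 - lam) * (\sum_v' \sum_(u' in nbhd e v')
    nR^-1 * (fit r S u' / (\sum_(w in nbhd e v') fit r S w)) * (upd S u' v' == v |: S)%:R).
  by apply: mulr_ge0 => //; rewrite subr_ge0 invf_le1 ?ler1n.
rewrite /trans /delta; apply: le_trans l1 _; by rewrite lerDl.
Qed.

Lemma h_lower k (S : {set V}) : S != set0 -> (#|V| <= #|S| + k)%N -> delta ^+ k <= h k S.
Proof.
elim: k S => [|k IH] S H0 Hc.
  have -> : S = [set: V].
    by apply/eqP; rewrite eqEcard finset.subsetT cardsT -(addn0 #|S|).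
  by rewrite h0 eqxx expr0.
rewrite hS; case: (eqVneq S [set: V]) => [_|HT].
  by rewrite exprn_ile1 // ?delta_le1 // ltW // delta_gt0.
have [u [v [Hu Hv Huv]]] := cut_edge _ H0 HT.
have Hd := trans_cut _ _ _ Hu Hv Huv.
have Hh : delta ^+ k <= h k (v |: S).
  apply: IH; first by apply/set0Pn; exists v; rewrite !inE eqxx.
  by rewrite cardsU1 Hv add1n addSnnS.
have : trans e lam r S (v |: S) * h k (v |: S) <= T (h k) S.
  rewrite /T (bigD1 (v |: S)) //= lerDl; apply: sumr_ge0 => S' _.
  by apply: mulr_ge0; [exact: trans_ge0 | exact: h_ge0].
apply: le_trans; rewrite exprS; apply: ler_pM => //.
- exact: ltW delta_gt0.
- by rewrite exprn_ge0 // ltW // delta_gt0.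
Qed.

Lemma q_abs t S : (S == [set: V]) || (S == set0) -> q t S = 0.
Proof. by case: t => [|t] /= ->. Qed.

Lemma q_mult m M : 0 <= M -> (forall S, q m S <= M) ->
  forall t S, q (t + m) S <= M * q t S.
Proof.
move=> M0 HM; elim=> [|t IH] S.
  rewrite add0n; case Ha: ((S == [set: V]) || (S == set0)).
    by rewrite !q_abs ?mulr0.
  by rewrite /= Ha mulr1.
rewrite addSn /=; case: ifP => _; first by rewrite mulr0.
rewrite -T_scale; apply: T_mono => S'; exact: IH.
Qed.

Lemma q_geo N M : 0 <= M -> (forall S, q N S <= M) ->
  forall k S, q (k * N) S <= M ^+ k.
Proof.
move=> M0 HM; elim=> [|k IH] S.
  rewrite mul0n expr0 /=; case: ifP => _ //; exact: ler01.
rewrite mulSnr; apply: le_trans (q_mult _ _ M0 HM _ _) _.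
rewrite exprS; apply: ler_wpM2l => //.
Qed.

Lemma h_mono t S : h t S <= h t.+1 S.
Proof.
elim: t S => [|t IH] S.
  rewrite h0 hS; case: ifP => // _; apply: sumr_ge0 => S' _; apply: mulr_ge0; [exact: trans_ge0|exact: h_ge0].
rewrite hS [h t.+2 S]hS; case: ifP => // _; apply: T_mono => S'; exact: IH.
Qed.

Lemma h_le1 t S : h t S <= 1.
Proof. apply: le_trans (hq_le1 t S); by rewrite lerDl q_ge0. Qed.

Lemma main (S0 : {set V}) : Phi S0 <= fp e lam r S0.
Proof.
set N := #|V|.
set M := 1 - delta ^+ N.
have dN0 : 0 < delta ^+ N by rewrite exprn_gt0 // delta_gt0.
have dN1 : delta ^+ N <= 1 by rewrite exprn_ile1 // ?delta_le1 // ltW // delta_gt0.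
have M0 : 0 <= M by rewrite /M subr_ge0.
have M1 : `|M| < 1 by rewrite ger0_norm // /M ltrBlDr ltrDl.
have HM : forall S, q N S <= M.
  move=> S; case Ha: ((S == [set: V]) || (S == set0)); first by rewrite q_abs.
  move/negbT: Ha; rewrite negb_or => /andP [HT H0].
  have := hq_le1 N S; have := h_lower _ _ H0 (leq_addl _ _).
  rewrite /M; lra.
set u_ := fun t => h t S0.
have nd : nondecreasing_seq u_ by apply/nondecreasing_seqP => t; exact: h_mono.
have ub : has_ubound (range u_) by exists 1 => x [t _ <-]; exact: h_le1.
have cv : cvgn u_ by apply/cvg_ex; eexists; exact: nondecreasing_cvgn nd ub.
have Hk k : Phi S0 - M ^+ k <= limn u_.
  have := phi_le (k * N) S0; have := q_geo _ _ M0 HM k S0.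
  have := nondecreasing_cvgn_le nd cv (k * N).
  rewrite /u_; lra.
have Hc : ((fun k => Phi S0 - M ^+ k) @ \oo --> Phi S0)%classic.
  rewrite -[X in (_ --> X)%classic]subr0; apply: cvgB; [exact: cvg_cst | exact: cvg_expr].
rewrite /fp -/u_ -(cvg_lim _ Hc) //.
apply: limr_le; first exact: cvgP Hc.
by near=> k; apply: Hk.
Unshelve. all: by end_near.
Qed.

End Pf.

Theorem mainTheorem6 (R : realType) (V : finType) (e : rel V)
  (Hsimple : simple_graph e) (Hconn : connected_graph e) (Hn : (1 < #|V|)%N)
  (r : R) (Hr : 1 <= r) (S0 : {set V}) :
  #|S0|%:R / #|V|%:R <= fp e (2^-1) r S0.
Proof.
case: Hsimple => Hsym _.
by apply: main.
Qed.
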